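(* Let $A\subseteq\mathcal{R}$ be outer measurable and let $I$ be an interval in $\mathcal{R}$. Then $A\cap I$ is outer measurable.
   Context: $\mathcal{R}$ denotes the Levi-Civita field: functions $x:\mathbb{Q}\to\mathbb{R}$ with left-finite support, with componentwise addition and formal power series multiplication, ordered by $x>0$ iff $x\ne0$ and $x[\min\operatorname{supp}x]>0$; it is a non-Archimedean ordered field extension of $\mathbb{R}$, Cauchy complete in the order topology, in which all limits and series are taken (a series $\sum a_n$ converges iff $a_n\to0$). An interval is a set $[a,b],[a,b),(a,b]$ or $(a,b)$ with $a<b$ in $\mathcal{R}$, of length $l=b-a$. A cover of $A\subseteq\mathcal{R}$ is a sequence of intervals $(S_n)_{n\ge1}$ with $A\subseteq\bigcup_n S_n$ and $\sum_n l(S_n)$ convergent in $\mathcal{R}$. $A$ is called outer measurable if the infimum $\inf\{\sum_n l(S_n): (S_n)\text{ a cover of }A\}$ exists in $\mathcal{R}$; this infimum is then called the outer measure $M_u(A)$. *)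

(* Defs.v *)
From mathcomp Require Import all_boot all_order all_algebra.
From Stdlib Require Import Reals.
Set Implicit Arguments. Unset Strict Implicit. Unset Printing Implicit Defensive.
Import Order.TTheory GRing.Theory Num.Theory.

(** * The Levi-Civita field (additive ordered group structure)
    Elements: functions x : Q -> R with left-finite support, i.e. for every
    q : Q only finitely many t < q have x t <> 0. *)

Definition left_finite (x : rat -> R) : Prop :=
  forall q : rat, exists s : seq rat,
    forall t : rat, (t < q)%O -> x t <> R0 -> t \in s.

Definition LC := {x : rat -> R | left_finite x}.

Definition coef (x : LC) : rat -> R := proj1_sig x.

Lemma left_finite0 : left_finite (fun _ => R0).
Proof. by move=> q; exists [::] => t _ []. Qed.

Lemma left_finite_add (x y : LC) :
  left_finite (fun q => Rplus (coef x q) (coef y q)).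
Proof.
move=> q; case: (proj2_sig x q) => s1 H1; case: (proj2_sig y q) => s2 H2.
exists (s1 ++ s2) => t tq Hne; rewrite mem_cat; apply/orP.
case: (Req_dec (coef x t) R0) => Hx.
- right; apply: H2 => // Hy; apply: Hne; rewrite /coef in Hx *; rewrite Hx Hy; exact: Rplus_0_r.
- by left; apply: H1.
Qed.

Lemma left_finite_opp (x : LC) : left_finite (fun q => Ropp (coef x q)).
Proof.
move=> q; case: (proj2_sig x q) => s H; exists s => t tq Hne; apply: H => // Hx.
by apply: Hne; rewrite /coef Hx Ropp_0.
Qed.

Definition LC0 : LC := exist _ _ left_finite0.
Definition LCadd (x y : LC) : LC := exist _ _ (left_finite_add x y).
Definition LCopp (x : LC) : LC := exist _ _ (left_finite_opp x).
Definition LCsub (x y : LC) : LC := LCadd x (LCopp y).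

(** x > 0 iff x <> 0 and x[min supp x] > 0: there is q with x q > 0 and
    x t = 0 for all t < q (then q = min supp x). *)
Definition LCpos (x : LC) : Prop :=
  exists q : rat, Rlt R0 (coef x q) /\ forall t : rat, (t < q)%O -> coef x t = R0.

Definition LClt (x y : LC) : Prop := LCpos (LCsub y x).
Definition LCeq (x y : LC) : Prop := forall q, coef x q = coef y q.
Definition LCle (x y : LC) : Prop := LClt x y \/ LCeq x y.

Definition LCcvg (u : nat -> LC) (l : LC) : Prop :=
  forall eps : LC, LCpos eps -> exists N : nat, forall n : nat, (N <= n)%N ->
    LClt (LCopp eps) (LCsub (u n) l) /\ LClt (LCsub (u n) l) eps.

Fixpoint LCpartial (a : nat -> LC) (n : nat) : LC :=
  match n with
  | O => LC0
  | S m => LCadd (LCpartial a m) (a m)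
  end.

Definition LChas_sum (a : nat -> LC) (s : LC) : Prop := LCcvg (LCpartial a) s.

Record interval := Interval { ia : LC; ib : LC; iclosed_l : bool; iclosed_r : bool }.

Definition is_interval (I : interval) : Prop := LClt (ia I) (ib I).

Definition in_interval (I : interval) (x : LC) : Prop :=
  (if iclosed_l I then LCle (ia I) x else LClt (ia I) x) /\
  (if iclosed_r I then LCle x (ib I) else LClt x (ib I)).

Definition ilength (I : interval) : LC := LCsub (ib I) (ia I).

Definition cover_with_sum (A : LC -> Prop) (S : nat -> interval) (s : LC) : Prop :=
  (forall n, is_interval (S n)) /\
  (forall x, A x -> exists n, in_interval (S n) x) /\
  LChas_sum (fun n => ilength (S n)) s.

Definition is_inf (P : LC -> Prop) (m : LC) : Prop :=
  (forall s, P s -> LCle m s) /\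
  (forall m', (forall s, P s -> LCle m' s) -> LCle m' m).

Definition outer_measurable (A : LC -> Prop) : Prop :=
  exists m : LC, is_inf (fun s => exists S : nat -> interval, cover_with_sum A S s) m.

(* Main.v *)
From Pilot Require Import Defs.
From Stdlib Require Import Reals Lra ClassicalEpsilon FunctionalExtensionality ProofIrrelevance Classical.
From mathcomp Require Import all_boot all_order all_algebra.
Set Implicit Arguments. Unset Strict Implicit. Unset Printing Implicit Defensive.
Import Order.TTheory GRing.Theory Num.Theory.

Section RatFacts.
Local Open Scope ring_scope.
Lemma rat_lt_add1 (q : rat) : (q < q + 1)%O.
Proof. by rewrite ltrDl ltr01. Qed.
Lemma rat_bound (q : rat) : exists K : nat, (q <= K%:R)%O.
Proof.
exists (Num.Def.archi_bound `|q|); apply: le_trans (ler_norm q) _.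
apply: ltW; apply: archi_boundP; exact: normr_ge0.
Qed.
Lemma rat_natle (m n : nat) : (m <= n)%N -> ((m%:R : rat) <= n%:R)%O.
Proof. by move=> h; rewrite ler_nat. Qed.
Lemma rat_subK (u K : rat) : u - K + K = u. Proof. by rewrite subrK. Qed.
Lemma rat_ltsub (u q K : rat) : (u < q)%O -> (u - K < q - K)%O.
Proof. by move=> h; rewrite ltrD2r. Qed.
Lemma rat_shift_lt (u q t : rat) : (u < q)%O -> (u - (q - t) < t)%O.
Proof. by move=> h; rewrite ltrBlDr (addrC t) subrK. Qed.
Lemma seq_min (l : seq rat) (a : rat) :
  exists m, m \in a :: l /\ forall t, t \in a :: l -> (m <= t)%O.
Proof.
elim: l a => [|b l IH] a.
  by exists a; split; [rewrite inE|move=> t; rewrite inE => /eqP->].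
case: (IH b) => m [Hm Hmin].
case: (leP a m) => Ham.
- exists a; split; first by rewrite inE eqxx.
  move=> t; rewrite inE => /orP[/eqP->//|Ht]; exact: le_trans Ham (Hmin _ Ht).
- exists m; split; first by rewrite inE Hm orbT.
  move=> t; rewrite inE => /orP[/eqP->|Ht]; [exact: ltW|exact: Hmin].
Qed.
End RatFacts.

Local Open Scope R_scope.

Lemma LCext (x y : LC) : (forall q, coef x q = coef y q) -> x = y.
Proof.
case: x => f hf; case: y => g hg /= H.
have E : f = g by apply: functional_extensionality.
subst g; by rewrite (proof_irrelevance _ hf hg).
Qed.

Lemma coef_add x y q : coef (LCadd x y) q = coef x q + coef y q. Proof. by []. Qed.
Lemma coef_opp x q : coef (LCopp x) q = - coef x q. Proof. by []. Qed.
Lemma coef_sub x y q : coef (LCsub x y) q = coef x q - coef y q. Proof. by []. Qed.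
Lemma coef0 q : coef LC0 q = 0. Proof. by []. Qed.

Definition is_lead (x : LC) (t : rat) :=
  coef x t <> 0 /\ forall u, (u < t)%O -> coef x u = 0.

Definition nzb (x : LC) (t : rat) : bool :=
  if Req_EM_T (coef x t) 0 then false else true.

Lemma nzbP x t : nzb x t <-> coef x t <> 0.
Proof. by rewrite /nzb; case: Req_EM_T. Qed.

Lemma lead_exists x q : coef x q <> 0 -> exists t, (t <= q)%O /\ is_lead x t.
Proof.
move=> Hq; case: (proj2_sig x q) => s Hs.
case: (seq_min [seq t <- s | (t < q)%O && nzb x t] q) => t0 [Ht0 Hmin].
exists t0; split; first by apply: Hmin; rewrite inE eqxx.
move: Ht0; rewrite inE mem_filter => /orP[/eqP E|/andP[/andP[Hlt Hnz] _]].
- subst t0; split=> // u Hu; apply: NNPP => Hne.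
  have : (q <= u)%O by apply: Hmin; rewrite inE mem_filter Hu /= (proj2 (nzbP _ _) Hne) /=;
     rewrite orbC; apply/orP; left; exact: Hs.
  by rewrite leNgt Hu.
- split; first by apply/nzbP.
  move=> u Hu; apply: NNPP => Hne.
  have Huq : (u < q)%O by exact: lt_trans Hu Hlt.
  have : (t0 <= u)%O.
    apply: Hmin; rewrite inE mem_filter Huq /= (proj2 (nzbP _ _) Hne) /=.
    by rewrite orbC; apply/orP; left; exact: Hs.
  by rewrite leNgt Hu.
Qed.

Definition LCz (x : LC) := forall q, coef x q = 0.
Definition nn (x : LC) := LCz x \/ LCpos x.
Definition small (q : rat) (x : LC) := forall u, (u < q)%O -> coef x u = 0.

Lemma lead_unique x t t' : is_lead x t -> is_lead x t' -> t = t'.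
Proof.
move=> [H1 H2] [H3 H4]; case: (ltgtP t t') => // h.
- by case: H1; apply: H4.
- by case: H3; apply: H2.
Qed.

Lemma pos_is_lead x q : 0 < coef x q -> (forall t, (t < q)%O -> coef x t = 0) -> is_lead x q.
Proof. move=> h1 h2; split=> //; lra. Qed.

Lemma pos_lead x t : LCpos x -> is_lead x t -> 0 < coef x t.
Proof.
move=> [q [h1 h2]] hl; have := lead_unique (pos_is_lead h1 h2) hl; by move=> <-.
Qed.

Lemma lead_pos x t : is_lead x t -> 0 < coef x t -> LCpos x.
Proof. by move=> [_ h] h'; exists t. Qed.

Lemma lead_neg x t : is_lead x t -> coef x t < 0 -> LCpos (LCopp x).
Proof.
move=> [h1 h2] h; exists t; rewrite coef_opp; split; first lra.
by move=> u hu; rewrite coef_opp h2 //; lra.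
Qed.

Lemma trich x : LCz x \/ LCpos x \/ LCpos (LCopp x).
Proof.
case: (classic (LCz x)) => hz; first by left.
right; have [q hq] : exists q, coef x q <> 0.
  by apply: NNPP => h; apply: hz => q; apply: NNPP => h'; apply: h; exists q.
case: (lead_exists hq) => t [_ hl].
case: (Rlt_or_le 0 (coef x t)) => h; first by left; exact: lead_pos hl h.
right; apply: (lead_neg hl); case: hl => hne _; lra.
Qed.

Lemma pos_ext x y : (forall q, coef x q = coef y q) -> LCpos x -> LCpos y.
Proof. by move=> E [q [h1 h2]]; exists q; rewrite -E; split=> // t ht; rewrite -E h2. Qed.

Lemma z_ext x y : (forall q, coef x q = coef y q) -> LCz x -> LCz y.
Proof. by move=> E h q; rewrite -E. Qed.

Lemma nn_ext x y : (forall q, coef x q = coef y q) -> nn x -> nn y.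
Proof. move=> E [h|h]; [left; exact: z_ext E h|right; exact: pos_ext E h]. Qed.

Lemma pos_add x y : LCpos x -> LCpos y -> LCpos (LCadd x y).
Proof.
move=> [q1 [h1 h2]] [q2 [h3 h4]].
case: (ltgtP q1 q2) => hq.
- exists q1; rewrite coef_add (h4 q1 hq); split; first lra.
  by move=> t ht; rewrite coef_add h2 // h4 //; [lra|exact: lt_trans ht hq].
- exists q2; rewrite coef_add (h2 q2 hq); split; first lra.
  by move=> t ht; rewrite coef_add h2 ?h4 //; [lra|exact: lt_trans ht hq].
- subst q2; exists q1; rewrite coef_add; split; first lra.
  by move=> t ht; rewrite coef_add h2 ?h4 //; lra.
Qed.

Lemma pos_nz x : LCpos x -> LCz x -> False.
Proof. move=> [q [h1 _]] h; rewrite h in h1; lra. Qed.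

Lemma pos_antisym x : LCpos x -> LCpos (LCopp x) -> False.
Proof.
move=> [q [h1 h2]] [q' [h3 h4]].
have hl : is_lead x q'.
  split; first by rewrite coef_opp in h3; lra.
  by move=> u hu; have := h4 u hu; rewrite coef_opp; lra.
have := lead_unique (pos_is_lead h1 h2) hl => E; subst q'.
rewrite coef_opp in h3; lra.
Qed.

Lemma nn_add x y : nn x -> nn y -> nn (LCadd x y).
Proof.
move=> [hx|hx] [hy|hy].
- by left=> q; rewrite coef_add hx hy; lra.
- right; apply: pos_ext hy => q; rewrite coef_add hx; lra.
- right; apply: pos_ext hx => q; rewrite coef_add hy; lra.
- right; exact: pos_add.
Qed.

Lemma nn_pos_add x y : nn x -> LCpos y -> LCpos (LCadd x y).
Proof.
move=> [hx|hx] hy; last exact: pos_add.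
apply: pos_ext hy => q; rewrite coef_add hx; lra.
Qed.

Lemma pos_nn x : LCpos x -> nn x. Proof. by right. Qed.

Lemma le_nn x y : LCle x y <-> nn (LCsub y x).
Proof.
split.
- move=> [h|h]; [by right|left=> q; rewrite coef_sub h; lra].
- move=> [h|h]; [right=> q; have := h q; rewrite coef_sub; lra|by left].
Qed.

Lemma lt_pos x y : LClt x y <-> LCpos (LCsub y x).
Proof. by []. Qed.

Lemma not_nn x : ~ nn x -> LCpos (LCopp x).
Proof. move=> h; case: (trich x) => [h'|[h'|h']] //; case: h; [left|right]; done. Qed.

Lemma nn_notneg x : nn x -> LCpos (LCopp x) -> False.
Proof.
move=> [h|h] h'; last exact: pos_antisym h h'.
apply: pos_nz h' _ => q; rewrite coef_opp h; lra.
Qed.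

Lemma le_total x y : ~ LCle x y -> LClt y x.
Proof.
move=> h; rewrite lt_pos; have h' : ~ nn (LCsub y x) by move=> h2; apply: h; apply/le_nn.
apply: pos_ext (not_nn h') => q; rewrite coef_opp !coef_sub; lra.
Qed.

Lemma LClt_le x y : LClt x y -> LCle x y. Proof. by left. Qed.
Lemma LCle_refl x : LCle x x. Proof. by right. Qed.

Lemma LCle_trans x y z : LCle x y -> LCle y z -> LCle x z.
Proof.
move=> /le_nn h1 /le_nn h2; apply/le_nn; apply: nn_ext (nn_add h2 h1) => q.
rewrite coef_add !coef_sub; lra.
Qed.

Lemma LCle_lt_trans x y z : LCle x y -> LClt y z -> LClt x z.
Proof.
move=> /le_nn h1 h2; rewrite lt_pos; apply: pos_ext (nn_pos_add h1 h2) => q.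
rewrite coef_add !coef_sub; lra.
Qed.

Lemma lead_transfer x y t r : (forall u, (u < r)%O -> coef x u = coef y u) ->
  (t < r)%O -> is_lead x t -> is_lead y t /\ coef y t = coef x t.
Proof.
move=> E htr [h1 h2]; split; last by rewrite E.
split; first by rewrite -E.
move=> u hu; have hur : (u < r)%O by exact: lt_trans hu htr.
by rewrite -E // h2.
Qed.

Lemma nn_lead_neg z t : nn z -> is_lead z t -> coef z t < 0 -> False.
Proof.
move=> [h|h] hl hc; first by case: hl => hne _; apply: hne; apply: h.
have := pos_lead h hl; lra.
Qed.

Lemma small_mono q q' x : small q' x -> (q <= q')%O -> small q x.
Proof. by move=> h hq u hu; apply: h; exact: lt_le_trans hu hq. Qed.

Lemma small_add q x y : small q x -> small q y -> small q (LCadd x y).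
Proof. by move=> h1 h2 u hu; rewrite coef_add h1 ?h2 //; lra. Qed.

Lemma not_small q x : ~ small q x -> exists t, (t < q)%O /\ is_lead x t.
Proof.
move=> h; have [u [hu hne]] : exists u, (u < q)%O /\ coef x u <> 0.
  apply: NNPP => h'; apply: h => u hu; apply: NNPP => hne; apply: h'; by exists u.
case: (lead_exists hne) => t [htu hl]; exists t; split=> //; exact: le_lt_trans htu hu.
Qed.

Lemma small_sandwich q y e1 e2 : small q e1 -> small q e2 ->
  nn (LCadd y e1) -> nn (LCsub e2 y) -> small q y.
Proof.
move=> s1 s2 n1 n2; apply: NNPP => h; case: (not_small h) => t [htq hl].
case: (Rlt_or_le 0 (coef y t)) => hc.
- have E : forall u, (u < q)%O -> coef (LCopp y) u = coef (LCsub e2 y) u.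
    by move=> u hu; rewrite coef_sub coef_opp s2 //; lra.
  have hl' : is_lead (LCopp y) t.
    case: hl => h1 h2; split; first by rewrite coef_opp; lra.
    by move=> u hu; rewrite coef_opp h2 //; lra.
  case: (lead_transfer E htq hl') => hl2 hc2.
  apply: (nn_lead_neg n2 hl2); rewrite hc2 coef_opp; lra.
- have E : forall u, (u < q)%O -> coef y u = coef (LCadd y e1) u.
    by move=> u hu; rewrite coef_add s1 //; lra.
  case: (lead_transfer E htq hl) => hl2 hc2.
  apply: (nn_lead_neg n1 hl2); rewrite hc2; case: hl => hne _; lra.
Qed.

Lemma small_below q y z : nn y -> nn (LCsub z y) -> small q z -> small q y.
Proof.
move=> h1 h2 h3.
have s0 : small q LC0 by move=> u _; rewrite coef0.
have n0 : nn (LCadd y LC0) by apply: nn_ext h1 => u; rewrite coef_add coef0; lra.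
exact: (small_sandwich s0 h3 n0 h2).
Qed.

Definition mono_f (q : rat) : rat -> R := fun t => if t == q then 1 else 0.
Lemma mono_lf q : left_finite (mono_f q).
Proof.
move=> p; exists [:: q] => t _; rewrite /mono_f inE.
by case: eqP => // _ h; case: h.
Qed.
Definition mono q : LC := exist _ _ (mono_lf q).

Lemma mono_below q u : (u < q)%O -> coef (mono q) u = 0.
Proof. by move=> h; rewrite /coef /= /mono_f (lt_eqF h). Qed.
Lemma mono_at q : coef (mono q) q = 1.
Proof. by rewrite /coef /= /mono_f eqxx. Qed.
Lemma mono_pos q : LCpos (mono q).
Proof. exists q; rewrite mono_at; split; [lra|exact: mono_below]. Qed.
Lemma mono_small q : small q (mono q).
Proof. exact: mono_below. Qed.

Lemma pos_agree x z r : LCpos x -> (forall q0, 0 < coef x q0 -> (forall t, (t < q0)%O -> coef x t = 0) -> (q0 < r)%O) ->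
  (forall u, (u < r)%O -> coef x u = coef z u) -> LCpos z.
Proof.
move=> [q0 [h1 h2]] hr E.
have hl := pos_is_lead h1 h2.
case: (lead_transfer E (hr _ h1 h2) hl) => hl2 hc.
apply: (lead_pos hl2); lra.
Qed.

Lemma cvg_small u l : LCcvg u l <-> forall q, exists N, forall n, (N <= n)%N -> small q (LCsub (u n) l).
Proof.
split.
- move=> H q; case: (H _ (mono_pos q)) => N HN; exists N => n hn.
  case: (HN n hn) => h1 h2; set y := LCsub (u n) l in h1 h2 *.
  apply: NNPP => hs; case: (not_small hs) => t [htq [hne hlow]].
  case: (Rlt_or_le 0 (coef y t)) => hc.
  + have hl : is_lead (LCsub (mono q) y) t.
      split; first by rewrite coef_sub mono_below //; lra.
      move=> v hv; rewrite coef_sub mono_below ?hlow //; [lra|exact: lt_trans hv htq].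
    have := pos_lead h2 hl; rewrite coef_sub mono_below //; lra.
  + have hl : is_lead (LCsub y (LCopp (mono q))) t.
      split; first by rewrite coef_sub coef_opp mono_below //; lra.
      move=> v hv; rewrite coef_sub coef_opp mono_below ?hlow //; [lra|exact: lt_trans hv htq].
    have := pos_lead h1 hl; rewrite coef_sub coef_opp mono_below //; lra.
- move=> H eps heps; case: (heps) => [q0 [h1 h2]].
  case: (H (q0 + 1)%R) => N HN; exists N => n hn; have hs := HN n hn.
  have hr : forall q1, 0 < coef eps q1 -> (forall t, (t < q1)%O -> coef eps t = 0) -> (q1 < (q0 + 1)%R)%O.
    move=> q1 h3 h4; have := lead_unique (pos_is_lead h1 h2) (pos_is_lead h3 h4) => ->.
    exact: rat_lt_add1.
  split.
  + apply: (pos_agree heps hr) => v hv; have := hs v hv; rewrite !coef_sub coef_opp; lra.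
  + apply: (pos_agree heps hr) => v hv; have := hs v hv; rewrite !coef_sub; lra.
Qed.

Lemma cvg_unique u l l' : LCcvg u l -> LCcvg u l' -> forall t, coef l t = coef l' t.
Proof.
move=> /cvg_small H1 /cvg_small H2 t.
case: (H1 (t + 1)%R) => N1 h1; case: (H2 (t + 1)%R) => N2 h2.
have a := h1 (maxn N1 N2) (leq_maxl _ _) t (rat_lt_add1 t).
have b := h2 (maxn N1 N2) (leq_maxr _ _) t (rat_lt_add1 t).
rewrite coef_sub in a; rewrite coef_sub in b; lra.
Qed.

Lemma cvg_nn u l : LCcvg u l -> (forall n, nn (u n)) -> nn l.
Proof.
move=> /cvg_small H hn; apply: NNPP => hl; have hp := not_nn hl.
case: (hp) => [q [h1 h2]].
case: (H (q + 1)%R) => N HN; have hs := HN N (leqnn N).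
apply: (nn_notneg (hn N)).
have hr : forall q1, 0 < coef (LCopp l) q1 -> (forall t, (t < q1)%O -> coef (LCopp l) t = 0) -> (q1 < (q + 1)%R)%O.
  move=> q1 h3 h4; have := lead_unique (pos_is_lead h1 h2) (pos_is_lead h3 h4) => ->.
  exact: rat_lt_add1.
apply: (pos_agree hp hr) => v hv; have := hs v hv; rewrite !coef_opp coef_sub; lra.
Qed.

Lemma cvg_ext u v l l' : (forall n q, coef (u n) q = coef (v n) q) -> (forall q, coef l q = coef l' q) ->
  LCcvg u l -> LCcvg v l'.
Proof.
move=> E1 E2 /cvg_small H; apply/cvg_small => q; case: (H q) => N HN; exists N => n hn t ht.
by have := HN n hn t ht; rewrite !coef_sub E1 E2.
Qed.

Lemma cvg_add u v l l' : LCcvg u l -> LCcvg v l' ->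
  LCcvg (fun n => LCadd (u n) (v n)) (LCadd l l').
Proof.
move=> /cvg_small H1 /cvg_small H2; apply/cvg_small => q.
case: (H1 q) => N1 h1; case: (H2 q) => N2 h2; exists (maxn N1 N2) => n hn t ht.
have a := h1 n (leq_trans (leq_maxl _ _) hn) t ht.
have b := h2 n (leq_trans (leq_maxr _ _) hn) t ht.
rewrite coef_sub in a; rewrite coef_sub in b; rewrite coef_sub !coef_add; lra.
Qed.

Lemma LC_complete (x : nat -> LC) :
  (forall q, exists N, forall n, (N <= n)%N -> small q (LCsub (x n) (x N))) ->
  exists l, LCcvg x l.
Proof.
move=> H.
pose Nf q := proj1_sig (constructive_indefinite_description _ (H q)).
have HN : forall q n, (Nf q <= n)%N -> small q (LCsub (x n) (x (Nf q))).
  move=> q; exact: (proj2_sig (constructive_indefinite_description _ (H q))).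
have agree : forall q n t, (Nf q <= n)%N -> (t < q)%O -> coef (x n) t = coef (x (Nf q)) t.
  move=> q n t hn ht; have := HN q n hn t ht; rewrite coef_sub; lra.
pose c := fun t => coef (x (Nf (t + 1)%R)) t.
have key : forall q n t, (Nf q <= n)%N -> (t < q)%O -> coef (x n) t = c t.
  move=> q n t hn ht; set M := maxn n (Nf (t + 1)%R).
  rewrite (agree q n t hn ht) -(agree q M t) //; last exact: leq_trans hn (leq_maxl _ _).
  exact: agree (leq_maxr _ _) (rat_lt_add1 t).
have lf : left_finite c.
  move=> q; case: (proj2_sig (x (Nf q)) q) => s hs; exists s => t ht hne.
  apply: (hs t ht); rewrite -/(coef (x (Nf q)) t) (key q (Nf q) t (leqnn _) ht); exact: hne.
exists (exist _ c lf); apply/cvg_small => q; exists (Nf q) => n hn t ht.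
by rewrite coef_sub (key q n t hn ht) /coef /=; lra.
Qed.

Lemma partial0 a : LCpartial a 0 = LC0. Proof. by []. Qed.
Lemma partialS a n : LCpartial a n.+1 = LCadd (LCpartial a n) (a n). Proof. by []. Qed.

Lemma terms_small a s : LChas_sum a s -> forall q, exists N, forall n, (N <= n)%N -> small q (a n).
Proof.
move=> /cvg_small H q; case: (H q) => N HN; exists N => n hn t ht.
have h1 := HN n hn t ht; have h2 := HN n.+1 (leqW hn) t ht.
rewrite coef_sub in h1; rewrite coef_sub partialS coef_add in h2; lra.
Qed.

Lemma series_cvg a : (forall q, exists N, forall n, (N <= n)%N -> small q (a n)) ->
  exists s, LChas_sum a s.
Proof.
move=> H; apply: LC_complete => q; case: (H q) => N HN; exists N => n hn.
have : forall k, small q (LCsub (LCpartial a (N + k)) (LCpartial a N)).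
  elim=> [|k IH] t ht; first by rewrite addn0 coef_sub; lra.
  rewrite addnS coef_sub partialS coef_add.
  have := IH t ht; rewrite coef_sub => h; rewrite (HN (N + k)%N (leq_addr _ _) t ht); lra.
by move=> /(_ (n - N)%N); rewrite subnKC.
Qed.

Lemma has_sum_ext a b s s' : (forall n q, coef (a n) q = coef (b n) q) -> (forall q, coef s q = coef s' q) ->
  LChas_sum a s -> LChas_sum b s'.
Proof.
move=> E1 E2; apply: cvg_ext E2 => n q; elim: n => [|n IH] //.
by rewrite !partialS !coef_add IH E1.
Qed.

Lemma has_sum_add a b s t : LChas_sum a s -> LChas_sum b t ->
  LChas_sum (fun n => LCadd (a n) (b n)) (LCadd s t).
Proof.
move=> h1 h2; have := cvg_add h1 h2; apply: cvg_ext => // n q.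
elim: n => [|n IH]; first by rewrite coef_add !partial0 coef0; lra.
rewrite !partialS !coef_add; rewrite coef_add in IH; lra.
Qed.

Lemma has_sum_unique a s s' : LChas_sum a s -> LChas_sum a s' -> forall q, coef s q = coef s' q.
Proof. exact: cvg_unique. Qed.

Lemma has_sum_nn a s : LChas_sum a s -> (forall n, nn (a n)) -> nn s.
Proof.
move=> h hn; apply: cvg_nn h _; elim=> [|n IH]; first by left.
exact: nn_add.
Qed.

Section ShiftDef.
Local Open Scope ring_scope.
Definition shf (K : rat) (x : LC) : rat -> R := fun u => coef x (u - K).
Lemma shf_lf K x : left_finite (shf K x).
Proof.
move=> q; case: (proj2_sig x (q - K)) => s hs; exists [seq t + K | t <- s] => u hu hne.
rewrite -(rat_subK u K); apply: map_f; apply: hs => //; exact: rat_ltsub.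
Qed.
Definition shift K x : LC := exist _ _ (shf_lf K x).
Lemma coef_shift K x u : coef (shift K x) u = coef x (u - K). Proof. by []. Qed.
Lemma shift_lt_iff (t q K : rat) : (t - K < q)%O = (t < q + K)%O.
Proof. by rewrite ltrBlDr. Qed.
Lemma shift_addK (q K : rat) : q + K - K = q. Proof. by rewrite addrK. Qed.
End ShiftDef.

Lemma pos_shift K x : LCpos x -> LCpos (shift K x).
Proof.
move=> [q [h1 h2]]; exists (q + K)%R; rewrite coef_shift shift_addK; split=> // t ht.
by rewrite coef_shift h2 // shift_lt_iff.
Qed.

Lemma nn_shift K x : nn x -> nn (shift K x).
Proof. move=> [h|h]; [left=> q; rewrite coef_shift h //|right; exact: pos_shift]. Qed.

Lemma small_shift x t q : (forall u, (u < t)%O -> coef x u = 0) -> small q (shift (q - t)%R x).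
Proof. move=> h u hu; rewrite coef_shift; apply: h; exact: rat_shift_lt. Qed.

Lemma exists_lower_zero x : exists t, forall u, (u < t)%O -> coef x u = 0.
Proof.
case: (classic (LCz x)) => hz; first by exists 0%R => u _; apply: hz.
have [q hq] : exists q, coef x q <> 0.
  by apply: NNPP => h; apply: hz => q; apply: NNPP => h'; apply: h; exists q.
case: (lead_exists hq) => t [_ [_ h]]; by exists t.
Qed.

Lemma has_sum_shift K a s : LChas_sum a s -> LChas_sum (fun n => shift K (a n)) (shift K s).
Proof.
move=> /cvg_small H; apply/cvg_small => q.
have E : forall n u, coef (LCpartial (fun n => shift K (a n)) n) u = coef (LCpartial a n) (u - K)%R.
  by elim=> [|n IH] u //; rewrite !partialS !coef_add IH coef_shift.
case: (H (q - K)%R) => N HN; exists N => n hn u hu.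
rewrite coef_sub E coef_shift; have := HN n hn (u - K)%R (rat_ltsub K hu); rewrite coef_sub; lra.
Qed.

Definition merge {T} (a b : nat -> T) (n : nat) : T := if odd n then b n./2 else a n./2.

Lemma merge_even {T} (a b : nat -> T) k : merge a b k.*2 = a k.
Proof. by rewrite /merge odd_double half_double. Qed.
Lemma merge_odd {T} (a b : nat -> T) k : merge a b k.*2.+1 = b k.
Proof. by rewrite /merge /= odd_double /= uphalf_double. Qed.

Lemma has_sum_merge a b s t : LChas_sum a s -> LChas_sum b t ->
  LChas_sum (merge a b) (LCadd s t).
Proof.
move=> /cvg_small H1 /cvg_small H2; apply/cvg_small => q.
have E : forall k u, coef (LCpartial (merge a b) k) u =
    coef (LCpartial a (uphalf k)) u + coef (LCpartial b k./2) u.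
  elim=> [|k IH] u.
    have -> : uphalf 0 = 0%N by []. have -> : 0./2 = 0%N by [].
    rewrite !partial0 coef0; lra.
  rewrite partialS coef_add IH /merge.
  have -> : uphalf k.+1 = (k./2).+1 by [].
  have -> : k.+1./2 = uphalf k by [].
  rewrite uphalf_half; case ho: (odd k); rewrite ?add1n ?add0n !partialS !coef_add; lra.
case: (H1 q) => N1 h1; case: (H2 q) => N2 h2.
exists (maxn N1 N2).*2 => k hk u hu.
have hh : (maxn N1 N2 <= k./2)%N by rewrite -[maxn N1 N2]half_double; apply: half_leq.
have hu2 : (k./2 <= uphalf k)%N by rewrite uphalf_half leq_addl.
have a1 := h1 (uphalf k) (leq_trans (leq_maxl _ _) (leq_trans hh hu2)) u hu.
have b1 := h2 k./2 (leq_trans (leq_maxr _ _) hh) u hu.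
rewrite coef_sub in a1; rewrite coef_sub in b1.
rewrite coef_sub E coef_add; lra.
Qed.

Definition LCmin x y := if excluded_middle_informative (LCle x y) then x else y.
Definition LCmax x y := if excluded_middle_informative (LCle x y) then y else x.

Lemma minmax_sum x y q : coef (LCmin x y) q + coef (LCmax x y) q = coef x q + coef y q.
Proof. rewrite /LCmin /LCmax; case: (excluded_middle_informative (LCle x y)) => h /=; lra. Qed.

Lemma min_l x y : LCle (LCmin x y) x.
Proof. rewrite /LCmin; case: excluded_middle_informative => h; [exact: LCle_refl|apply: LClt_le; exact: le_total h]. Qed.
Lemma min_r x y : LCle (LCmin x y) y.
Proof. rewrite /LCmin; case: excluded_middle_informative => h; [exact: h|exact: LCle_refl]. Qed.
Lemma le_min z x y : LCle z x -> LCle z y -> LCle z (LCmin x y).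
Proof. by rewrite /LCmin; case: excluded_middle_informative. Qed.
Lemma max_l x y : LCle x (LCmax x y).
Proof. rewrite /LCmax; case: excluded_middle_informative => h; [exact: h|exact: LCle_refl]. Qed.
Lemma max_r x y : LCle y (LCmax x y).
Proof. rewrite /LCmax; case: excluded_middle_informative => h; [exact: LCle_refl|apply: LClt_le; exact: le_total h]. Qed.
Lemma max_le x y z : LCle x z -> LCle y z -> LCle (LCmax x y) z.
Proof. by rewrite /LCmax; case: excluded_middle_informative. Qed.
Lemma min_mono a b c : LCle a b -> LCle (LCmin a c) (LCmin b c).
Proof. move=> h; apply: le_min; [exact: LCle_trans (min_l _ _) h|exact: min_r]. Qed.
Lemma max_mono a b c : LCle a b -> LCle (LCmax a c) (LCmax b c).
Proof. move=> h; apply: max_le; [exact: LCle_trans h (max_l _ _)|exact: max_r]. Qed.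

Section QN.
Local Open Scope ring_scope.
Definition qn (n : nat) : rat := n%:R.
Lemma qn_bound (q : rat) : exists K : nat, (q <= qn K)%O.
Proof. exact: rat_bound. Qed.
Lemma qn_le (m n : nat) : (m <= n)%N -> (qn m <= qn n)%O.
Proof. exact: rat_natle. Qed.
End QN.

Lemma neg_lead w : LCpos (LCopp w) -> exists t0, is_lead w t0 /\ coef w t0 < 0.
Proof.
move=> [t0 [h1 h2]]; exists t0; rewrite coef_opp in h1; split; last lra.
split; first lra.
by move=> u hu; have := h2 u hu; rewrite coef_opp; lra.
Qed.

Lemma agree_contra z w t0 r : nn z -> is_lead w t0 -> coef w t0 < 0 -> (t0 < r)%O ->
  (forall u, (u < r)%O -> coef w u = coef z u) -> False.
Proof.
move=> hz hl hc htr E; case: (lead_transfer E htr hl) => hl2 hc2.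
apply: (nn_lead_neg hz hl2); lra.
Qed.

Lemma step2 (P : LC -> Prop) :
  (forall q, exists p, P p /\ exists eta, nn eta /\ small q eta /\
      forall p', P p' -> nn (LCsub p' (LCsub p eta))) ->
  exists c, is_inf P c.
Proof.
move=> H.
pose pf (n : nat) := proj1_sig (constructive_indefinite_description _ (H (qn n))).
have Hp : forall n, P (pf n) /\ exists eta, nn eta /\ small (qn n) eta /\
      forall p', P p' -> nn (LCsub p' (LCsub (pf n) eta)).
  move=> n; exact: (proj2_sig (constructive_indefinite_description _ (H (qn n)))).
pose ef n := proj1_sig (constructive_indefinite_description _ (proj2 (Hp n))).
have He : forall n, nn (ef n) /\ small (qn n) (ef n) /\
    forall p', P p' -> nn (LCsub p' (LCsub (pf n) (ef n))).
  move=> n; exact: (proj2_sig (constructive_indefinite_description _ (proj2 (Hp n)))).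
have [c Hc] : exists c, LCcvg pf c.
  apply: LC_complete => q; case: (qn_bound q) => N hN; exists N => n hn.
  case: (He N) => _ [sN hN']; case: (He n) => _ [sn hn'].
  have qn' : (q <= qn n)%O := Order.POrderTheory.le_trans hN (qn_le hn).
  apply: (small_sandwich (e1 := ef N) (e2 := ef n)).
  - exact: small_mono sN hN.
  - exact: small_mono sn qn'.
  - apply: nn_ext (hN' _ (proj1 (Hp n))) => u; rewrite !coef_sub coef_add ?coef_sub; lra.
  - apply: nn_ext (hn' _ (proj1 (Hp N))) => u; rewrite !coef_sub; lra.
have pick : forall r, exists n, (forall u, (u < r)%O -> coef (pf n) u = coef c u) /\ small r (ef n).
  move=> r; move/cvg_small: Hc => /(_ r) [N1 h1]; case: (qn_bound r) => K hK.
  exists (maxn N1 K); split.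
  - move=> u hu; have := h1 _ (leq_maxl N1 K) u hu; rewrite coef_sub; lra.
  - case: (He (maxn N1 K)) => _ [hs _]; apply: small_mono hs _.
    exact: Order.POrderTheory.le_trans hK (qn_le (leq_maxr _ _)).
exists c; split.
- move=> s hs; apply/le_nn; apply: NNPP => hn; have [t0 [hl hc]] := neg_lead (not_nn hn).
  case: (pick (t0 + 1)%R) => n [hag hsm].
  case: (He n) => _ [_ hP].
  apply: (agree_contra (hP s hs) hl hc (rat_lt_add1 t0)) => u hu.
  by rewrite !coef_sub hag // hsm //; lra.
- move=> m' hm'; apply/le_nn; apply: NNPP => hn; have [t0 [hl hc]] := neg_lead (not_nn hn).
  case: (pick (t0 + 1)%R) => n [hag _].
  have hz := proj1 (le_nn _ _) (hm' _ (proj1 (Hp n))).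
  apply: (agree_contra hz hl hc (rat_lt_add1 t0)) => u hu.
  by rewrite !coef_sub hag.
Qed.

Definition CS (X : LC -> Prop) (s : LC) := exists S, cover_with_sum X S s.

Lemma inf_approx X m d : is_inf (CS X) m -> LCpos d ->
  exists S s, cover_with_sum X S s /\ LCpos (LCsub (LCadd m d) s).
Proof.
move=> [h1 h2] hd; apply: NNPP => hne.
have lb : forall s, CS X s -> LCle (LCadd m d) s.
  move=> s [S hS]; apply: NNPP => hle; apply: hne; exists S, s; split=> //.
  exact: (le_total hle).
have /le_nn hn := h2 _ lb.
apply: (nn_notneg hn); apply: pos_ext hd => q; rewrite coef_opp coef_sub coef_add; lra.
Qed.

Lemma in_int_le I x : in_interval I x -> LCle (ia I) x /\ LCle x (ib I).
Proof.
rewrite /in_interval; case: (iclosed_l I); case: (iclosed_r I) => -[h1 h2];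
  split=> //; exact: LClt_le.
Qed.

Lemma in_int_strict I x : LClt (ia I) x -> LClt x (ib I) -> in_interval I x.
Proof.
move=> h1 h2; rewrite /in_interval; split.
- by case: (iclosed_l I) => //; exact: LClt_le.
- by case: (iclosed_r I) => //; exact: LClt_le.
Qed.

Lemma int_ok u v e : LCle u v -> LCpos e -> LClt (LCsub u e) v.
Proof.
move=> /le_nn h he; rewrite lt_pos; apply: pos_ext (nn_pos_add h he) => q.
rewrite coef_add !coef_sub; lra.
Qed.

Lemma sub_pos_le u e : LCpos e -> LCle (LCsub u e) u.
Proof.
move=> he; apply/le_nn; right; apply: pos_ext he => q; rewrite !coef_sub; lra.
Qed.

Lemma series_bound a z sz : LChas_sum z sz -> (forall n, nn (a n)) ->
  (forall n, nn (LCsub (z n) (a n))) -> exists s, LChas_sum a s.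
Proof.
move=> hz h1 h2; apply: series_cvg => q; case: (terms_small hz q) => N hN.
exists N => n hn; exact: small_below (h1 n) (h2 n) (hN n hn).
Qed.

Lemma merge_map {T U} (f : T -> U) a b n :
  f (merge a b n) = merge (fun k => f (a k)) (fun k => f (b k)) n.
Proof. by rewrite /merge; case: odd. Qed.

Lemma step1 A I m : is_interval I -> is_inf (CS A) m ->
  forall q, exists p, CS (fun x => A x /\ in_interval I x) p /\ exists eta, nn eta /\ small q eta /\
    forall p', CS (fun x => A x /\ in_interval I x) p' -> nn (LCsub p' (LCsub p eta)).
Proof.
move=> HI Hm q.
have [D [sD [[HDi [HDc HDs]] HsD]]] := inf_approx Hm (mono_pos q).
have nnD : nn sD by apply: (has_sum_nn HDs) => n; right; exact: HDi.
have [t Ht] := exists_lower_zero sD.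
pose K := (q - t)%R.
pose e n := shift K (ilength (D n)).
pose E := shift K sD.
have He : LChas_sum e E := has_sum_shift K HDs.
have Epos : forall n, LCpos (e n) by move=> n; exact: pos_shift (HDi n).
have Esm : small q E := small_shift Ht.
have Enn : nn E := nn_shift K nnD.
pose al := ia I; pose be := ib I.
pose L n := Defs.Interval (LCsub (LCmin (ia (D n)) al) (e n)) (LCmin (ib (D n)) al) true true.
pose M n := Defs.Interval (LCsub (LCmin (LCmax (ia (D n)) al) be) (e n)) (LCmin (LCmax (ib (D n)) al) be) true true.
pose Rr n := Defs.Interval (LCsub (LCmax (LCmax (ia (D n)) al) be) (e n)) (LCmax (LCmax (ib (D n)) al) be) true true.
have ab : forall n, LCle (ia (D n)) (ib (D n)) by move=> n; apply: LClt_le; exact: HDi.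
have Li : forall n, is_interval (L n).
  by move=> n; apply: int_ok (Epos n); apply: min_mono.
have Mi : forall n, is_interval (M n).
  by move=> n; apply: int_ok (Epos n); apply: min_mono; apply: max_mono.
have Ri : forall n, is_interval (Rr n).
  by move=> n; apply: int_ok (Epos n); apply: max_mono; apply: max_mono.
pose z n := LCadd (ilength (D n)) (LCadd (e n) (LCadd (e n) (e n))).
have Hz : LChas_sum z (LCadd sD (LCadd E (LCadd E E))).
  by apply: has_sum_add => //; apply: has_sum_add => //; apply: has_sum_add.
have Lsum : forall n u, coef (ilength (L n)) u + coef (ilength (M n)) u + coef (ilength (Rr n)) u
    = coef (z n) u.
  move=> n u; rewrite /ilength /z; cbn [ia ib L M Rr]; rewrite !coef_sub !coef_add ?coef_sub ?coef_opp.
  have := minmax_sum (ib (D n)) al u; have := minmax_sum (ia (D n)) al u.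
  have := minmax_sum (LCmax (ib (D n)) al) be u; have := minmax_sum (LCmax (ia (D n)) al) be u.
  lra.
have [sL hL] : exists s, LChas_sum (fun n => ilength (L n)) s.
  apply: (series_bound Hz) => n; first by right; exact: Li.
  apply: pos_nn; apply: pos_ext (pos_add (Mi n) (Ri n)) => u.
  have h := Lsum n u; rewrite [LHS]coef_add [RHS]coef_sub; rewrite /ilength in h *; lra.
have [sM hM] : exists s, LChas_sum (fun n => ilength (M n)) s.
  apply: (series_bound Hz) => n; first by right; exact: Mi.
  apply: pos_nn; apply: pos_ext (pos_add (Li n) (Ri n)) => u.
  have h := Lsum n u; rewrite [LHS]coef_add [RHS]coef_sub; rewrite /ilength in h *; lra.
have [sR hR] : exists s, LChas_sum (fun n => ilength (Rr n)) s.
  apply: (series_bound Hz) => n; first by right; exact: Ri.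
  apply: pos_nn; apply: pos_ext (pos_add (Li n) (Mi n)) => u.
  have h := Lsum n u; rewrite [LHS]coef_add [RHS]coef_sub; rewrite /ilength in h *; lra.
have hid : forall u, coef sL u + coef sM u + coef sR u = coef sD u + (coef E u + coef E u + coef E u).
  have h3 := has_sum_add hL (has_sum_add hM hR).
  have h3' : LChas_sum z (LCadd sL (LCadd sM sR)).
    apply: (has_sum_ext _ _ h3) => // n u; rewrite -Lsum !coef_add; lra.
  move=> u; have := has_sum_unique h3' Hz u; rewrite !coef_add; lra.
exists sM; split.
  exists M; split=> //; split=> // x [hA hI].
  case: (HDc x hA) => n hn; exists n.
  case: (in_int_le hn) => hax hxb; case: (in_int_le hI) => halx hxbe.
  split; cbn [ia ib M].
  - apply: LCle_trans (sub_pos_le _ (Epos n)) _.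
    apply: LCle_trans (min_l _ _) _; exact: max_le.
  - apply: le_min => //; exact: LCle_trans hxb (max_l _ _).
exists (LCadd (mono q) (LCadd E (LCadd E E))); split.
  apply: nn_add; [exact: pos_nn (mono_pos q)|apply: nn_add => //; exact: nn_add].
split.
  apply: small_add; [exact: mono_small|apply: small_add => //; exact: small_add].
move=> p' [C [HCi [HCc HCs]]].
have Wsum : LChas_sum (fun n => ilength (merge C (merge L Rr) n)) (LCadd p' (LCadd sL sR)).
  have h := has_sum_merge HCs (has_sum_merge hL hR).
  apply: (has_sum_ext _ _ h) => // n u.
  by rewrite merge_map /merge; case: odd => //; rewrite merge_map.
have Wcov : CS A (LCadd p' (LCadd sL sR)).
  exists (merge C (merge L Rr)); split.
    move=> n; rewrite /merge; case: odd => //; case: odd => //.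
  split=> // x hA.
  case: (classic (in_interval I x)) => hI.
    case: (HCc x (conj hA hI)) => k hk; exists k.*2; by rewrite merge_even.
  case: (HDc x hA) => n hn; case: (in_int_le hn) => hax hxb.
  case: (classic (LCle x al)) => hxal.
    exists (n.*2).*2.+1; rewrite merge_odd merge_even; split; cbn [ia ib L].
    - apply: LCle_trans (sub_pos_le _ (Epos n)) _; exact: LCle_trans (min_l _ _) hax.
    - exact: le_min.
  have halx := le_total hxal.
  case: (classic (LCle be x)) => hbex.
    exists (n.*2.+1).*2.+1; rewrite !merge_odd; split; cbn [ia ib Rr].
    - apply: LCle_trans (sub_pos_le _ (Epos n)) _; apply: max_le => //.
      apply: max_le => //; exact: LClt_le.
    - apply: LCle_trans (max_l _ _); exact: LCle_trans hxb (max_l _ _).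
  by case: hI; apply: in_int_strict => //; exact: le_total.
have /le_nn hX := proj1 Hm _ Wcov.
apply: pos_nn; apply: pos_ext (nn_pos_add hX HsD) => u.
have := hid u; rewrite !coef_sub !coef_add ?coef_sub ?coef_opp; lra.
Qed.

Import Pilot.Defs.

Theorem proposition3p3 (A : LC -> Prop) (I : interval) :
  is_interval I -> outer_measurable A ->
  outer_measurable (fun x => A x /\ in_interval I x).
Proof.
move=> HI [m Hm]; apply: step2; exact: step1 HI Hm.
Qed.
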